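(* Let $\mathcal C\subseteq\{0,1\}^n$ and $\mathcal D\subseteq\{0,1\}^m$ be neural codes and let $\phi:R_\mathcal D\to R_\mathcal C$ be a ring homomorphism. (i) There exists a ring homomorphism $\tau:R[m]\to R[n]$ which is compatible with $\phi$; thus $\phi$ is an $R[m]$-module homomorphism (with $R_\mathcal C$ viewed as an $R[m]$-module via $\tau$). (ii) The set of ring homomorphisms $\tau:R[m]\to R[n]$ compatible with $\phi$ is exactly the set of ring homomorphisms $\tau:R[m]\to R[n]$ such that $(\phi(f))^{-1}(1)\subseteq(\tau(f))^{-1}(1)$ for all $f\in R_\mathcal D$.
   Context: For a code $\mathcal C\subseteq\{0,1\}^n$, the neural ring $R_\mathcal C=\mathbb F_2[x_1,\dots,x_n]/I_\mathcal C$, where $I_\mathcal C$ is the ideal of polynomials vanishing on $\mathcal C$, is identified with the ring of all functions $\mathcal C\to\{0,1\}=\mathbb F_2$. $R[n]$ denotes the neural ring of the full code $\{0,1\}^n$, i.e. $\mathbb F_2[x_1,\dots,x_n]/\langle x_i^2-x_i\rangle$, the ring of all functions $\{0,1\}^n\to\{0,1\}$. $R_\mathcal C$ is an $R[n]$-module via $(r\cdot f)(c)=r(c)f(c)$. An element $f\in R_\mathcal D$ (a function on $\mathcal D\subseteq\{0,1\}^m$) is also regarded as an element of $R[m]$, namely the function on $\{0,1\}^m$ that is $1$ exactly on $f^{-1}(1)$; in particular $\tau(f)$ makes sense for $\tau:R[m]\to R[n]$. A ring homomorphism $\tau:R[m]\to R[n]$ is compatible with a group homomorphism $\phi:R_\mathcal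 D\to R_\mathcal C$ if $\phi(r\cdot f)=\tau(r)\cdot\phi(f)$ for all $r\in R[m]$, $f\in R_\mathcal D$, i.e. $\phi$ is an $R[m]$-module homomorphism when $R_\mathcal C$ is made an $R[m]$-module via $r\cdot g=\tau(r)\cdot g$. *)

(* Defs.v *)
(* Neural rings over F_2 = bool (addition = xorb, multiplication = andb). *)
From mathcomp Require Import all_boot all_order.
Set Implicit Arguments. Unset Strict Implicit. Unset Printing Implicit Defensive.

Definition cube (n : nat) : finType := {ffun 'I_n -> bool}.

(* Neural ring of a code C: the ring of all functions C -> F_2. *)
Definition neural_ring (n : nat) (C : {set cube n}) : Type :=
  {ffun {x : cube n | x \in C} -> bool}.

Definition full_ring (n : nat) : Type := {ffun cube n -> bool}.

Definition is_ring_hom (A B : finType)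
    (h : {ffun A -> bool} -> {ffun B -> bool}) : Prop :=
  [/\ forall f g : {ffun A -> bool}, h [ffun x => f x (+) g x] = [ffun y => h f y (+) h g y],
      forall f g : {ffun A -> bool}, h [ffun x => f x && g x] = [ffun y => h f y && h g y]
    & h [ffun _ => true] = [ffun _ => true]].

Definition act (n : nat) (C : {set cube n}) (r : full_ring n) (f : neural_ring C)
  : neural_ring C := [ffun c => r (val c) && f c].

(* f in R_D regarded as an element of R[m]: 1 exactly on f^{-1}(1). *)
Definition ext (m : nat) (D : {set cube m}) (f : neural_ring D) : full_ring m :=
  [ffun y => if insub y is Some y' then f y' else false].

Definition compatible (n m : nat) (C : {set cube n}) (D : {set cube m})
    (tau : full_ring m -> full_ring n) (phi : neural_ring D -> neural_ring C) : Prop :=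
  forall (r : full_ring m) (f : neural_ring D), phi (act r f) = act (tau r) (phi f).

(* Main.v *)
Require Import Defs.
From mathcomp Require Import all_boot all_order.

Lemma hom_zero (A B : finType) (h : {ffun A -> bool} -> {ffun B -> bool}) :
  is_ring_hom h -> forall b, h [ffun _ => false] b = false.
Proof.
case=> hD _ _ b.
have := hD [ffun _ => false] [ffun _ => false].
have -> : [ffun x => ([ffun _ => false] : {ffun A -> bool}) x (+) [ffun _ => false] x]
   = [ffun _ => false] by apply/ffunP=> x; rewrite !ffunE.
move=> /ffunP /(_ b); rewrite ffunE addbb; exact.
Qed.

Lemma hom_point (A B : finType) (h : {ffun A -> bool} -> {ffun B -> bool}) :
  is_ring_hom h -> forall b, exists a, forall f, h f b = f a.
Proof.
move=> hh b; have [hD hM h1] := hh.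
pose e (a : A) : {ffun A -> bool} := [ffun x => x == a].
have [/existsP [a Ha]|/existsPn Hn] := boolP [exists a, h (e a) b].
  exists a => f.
  have Hfe : h [ffun x => f x && e a x] b = h f b.
    by rewrite hM ffunE Ha andbT.
  rewrite -Hfe.
  case Hfa: (f a).
    have -> : [ffun x => f x && e a x] = e a.
      by apply/ffunP=> x; rewrite !ffunE; by case: eqP => [->|]; rewrite ?Hfa ?eqxx ?andbF ?andbT.
    exact: Ha.
  have -> : [ffun x => f x && e a x] = [ffun _ => false].
    by apply/ffunP=> x; rewrite !ffunE; by case: eqP => [->|]; rewrite ?Hfa ?eqxx ?andbF ?andbT.
  exact: hom_zero.
exfalso.
have Hs : forall s : seq A, h [ffun x => x \in s] b = false.
  elim=> [|a s IH].
    have -> : [ffun x => x \in ([::] : seq A)] = [ffun _ => false].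
      by apply/ffunP=> x; rewrite !ffunE.
    exact: hom_zero.
  have -> : [ffun x => x \in a :: s] =
     [ffun x => (e a) x (+) [ffun y => [ffun z => z \in s] y (+)
        [ffun z => (e a) z && [ffun w => w \in s] z] y] x].
    apply/ffunP=> x; rewrite !ffunE in_cons.
    by case: (x == a); case: (x \in s).
  rewrite hD ffunE hD ffunE hM ffunE IH.
  by move: (Hn a) => /negbTE ->.
have := Hs (enum A).
have -> : [ffun x => x \in enum A] = [ffun _ => true].
  by apply/ffunP=> x; rewrite !ffunE mem_enum.
by rewrite h1 ffunE.
Qed.

Theorem theorem3 (n m : nat) (C : {set cube n}) (D : {set cube m})
    (phi : neural_ring D -> neural_ring C) :
  is_ring_hom phi ->
  (exists tau : full_ring m -> full_ring n, is_ring_hom tau /\ compatible tau phi) /\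
  (forall tau : full_ring m -> full_ring n, is_ring_hom tau ->
     (compatible tau phi <->
      forall (f : neural_ring D) (c : {x : cube n | x \in C}),
        phi f c = true -> tau (ext f) (val c) = true)).
Proof.
move=> hphi.
have Pt := @hom_point _ _ phi hphi.
split.
  have [p Hp] := fin_all_exists Pt.
  pose q (x : cube n) : cube m :=
    if insub x is Some c then val (p c) else [ffun _ => false].
  exists (fun r => [ffun x => r (q x)]); split.
    split.
    - by move=> f g; apply/ffunP=> x; rewrite !ffunE.
    - by move=> f g; apply/ffunP=> x; rewrite !ffunE.
    - by apply/ffunP=> x; rewrite !ffunE.
  move=> r f; apply/ffunP=> c.
  by rewrite /act !ffunE Hp ffunE Hp /q valK.
move=> tau htau; split.
  move=> Hc f c Hf.
  have [d Hd] := Pt c.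
  pose ed : neural_ring D := [ffun x => x == d].
  have Htr : forall r, tau r (val c) = r (val d).
    move=> r; have := Hc r ed; move/ffunP/(_ c).
    by rewrite /act !ffunE !Hd !ffunE eqxx !andbT.
  by rewrite Htr /ext ffunE valK -Hd.
move=> Hc r f; apply/ffunP=> c.
have [d Hd] := Pt c.
have [q Hq] := @hom_point _ _ tau htau (val c).
pose ed : neural_ring D := [ffun x => x == d].
have := Hc ed c; rewrite Hd ffunE eqxx Hq /ext ffunE => /(_ erefl).
case: insubP => // d' _ Hv; rewrite ffunE => /eqP Ed.
by rewrite /act !ffunE Hd ffunE Hq -Hv Ed Hd.
Qed.
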